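(* Consider binary-tree pivotal sampling on a fixed full binary tree $T$ under the standing assumptions. Let $v$ be a non-root internal node and $b\in\{0,1\}$ with $\Pr[\xi_v=b]>0$. Let $\boldsymbol\xi_I$ be the vector of statuses $\xi_u$ of all nodes $u\ne v$ in the subtree rooted at $v$, and $\boldsymbol\xi_O$ the vector of statuses of all non-root nodes outside this subtree. Then, conditionally on $\xi_v=b$, $\boldsymbol\xi_I$ and $\boldsymbol\xi_O$ are independent: for all binary vectors $\mathbf x_I,\mathbf x_O$ of matching lengths, $$\Pr[\boldsymbol\xi_I=\mathbf x_I,\boldsymbol\xi_O=\mathbf x_O\mid\xi_v=b]=\Pr[\boldsymbol\xi_I=\mathbf x_I\mid\xi_v=b]\,\Pr[\boldsymbol\xi_O=\mathbf x_O\mid\xi_v=b].$$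
   Context: Binary-tree pivotal sampling: let $T$ be a full binary tree whose leaves are identified with an index set, and let $q_i\in[0,1]$ be leaf probabilities with integer sum. Each node can store an index together with a current probability; initially each leaf $i$ stores $i$ with probability $q_i$, and the output set $\mathcal S_{\rm out}$ is empty. Repeatedly choose two sibling nodes that both store indices, say $i$ with probability $q_i$ and $j$ with probability $q_j$, with parent $P$, and remove them. If $q_i+q_j\le1$: with probability $q_i/(q_i+q_j)$ store $i$ at $P$ with probability $q_i+q_j$ ($j$ is rejected), otherwise store $j$ at $P$ with probability $q_i+q_j$ ($i$ is rejected). If $q_i+q_j>1$: with probability $(1-q_i)/(2-q_i-q_j)$ put $j$ into $\mathcal S_{\rm out}$ and store $i$ at $P$ with probability $q_i+q_j-1$; otherwise put $i$ into $\mathcal S_{\rm out}$ and store $j$ at $P$ with probability $q_i+q_j-1$. When only the root stores an index, put it into $\mathcal S_{\rm out}$ iff its probability is $1$. Carried probabilities: $\pi_v=q_i$ for a leaf $v$ with index $i$; for an internal node $v$ with children $v_1,v_2$, $\pi_v=\pi_{v_1}+\pi_{v_2}$ if $\pi_{v_1}+\pi_{v_2}<1$ and $\pi_v=\pi_{v_1}+\pi_{v_2}-1$ if $\pi_{v_1}+\pi_{v_2}>1$. Node statuses: for a non-root node $v$, $\xi_v\in\{0,1\}$ is the indicator that the index stored at $v$ (for a leaf, its own index; for an internal node, the index promoted to $v$ by the comparison of its children) belongs to the final output $\mathcal S_{\rm out}$. Standing assumptions: all leaf probabilities lie in $(0,1)$; for every internal non-root node $v$ with children $v_1,v_2$, $\pi_{v_1}+\pi_{v_2}\ne1$;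 for the two children $r_1,r_2$ of the root, $\pi_{r_1}+\pi_{r_2}=1$. *)

(* Defs.v *)
From HB Require Import structures.
From mathcomp Require Import all_boot all_order all_algebra.
Set Implicit Arguments. Unset Strict Implicit. Unset Printing Implicit Defensive.
Import Order.TTheory GRing.Theory Num.Theory.
Local Open Scope ring_scope.

(* Nodes are addressed by their path from the
   root: a [seq bool], [false] = go to the left child, [true] = right child.
   The index set of the leaves is the set of leaf paths. *)
Inductive btree := Lf | Nd of btree & btree.

Fixpoint sub (t : btree) (p : seq bool) : option btree :=
  match p with
  | [::] => Some t
  | b :: p' => match t with Lf => None | Nd l r => sub (if b then r else l) p' end
  end.

Fixpoint nodes_from (s : btree) (p : seq bool) : seq (seq bool) :=
  p :: match s with
       | Lf => [::]
       | Nd l r => nodes_from l (rcons p false) ++ nodes_from r (rcons p true)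
       end.

Definition nodes (t : btree) := nodes_from t [::].

Definition is_internal (t : btree) (p : seq bool) : bool :=
  if sub t p is Some (Nd _ _) then true else false.
Definition is_leaf (t : btree) (p : seq bool) : bool :=
  if sub t p is Some Lf then true else false.

Definition inodes (t : btree) := [seq p <- nodes t | is_internal t p].
Definition leaves (t : btree) := [seq p <- nodes t | is_leaf t p].

Section Pivotal.
Variable R : realFieldType.

(* Under the standing assumptions
   this is the paper's pi_v. *)
Fixpoint carried (q : seq bool -> R) (s : btree) (p : seq bool) : R :=
  match s with
  | Lf => q p
  | Nd l r =>
      let x := carried q l (rcons p false) + carried q r (rcons p true) in
      if x <= 1 then x else x - 1
  end.

Definition piv (t : btree) (q : seq bool -> R) (p : seq bool) : R :=
  if sub t p is Some s then carried q s p else 0.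

(* An outcome [w : seq bool -> bool] records, at each internal node [p],
   whether the index coming from the left child ([w p = true]) or from the
   right child ([w p = false]) is stored at [p]. *)
Fixpoint stored_from (w : seq bool -> bool) (s : btree) (p : seq bool) : seq bool :=
  match s with
  | Lf => p
  | Nd l r => if w p then stored_from w l (rcons p false)
              else stored_from w r (rcons p true)
  end.

Definition stored (t : btree) (w : seq bool -> bool) (p : seq bool) : seq bool :=
  if sub t p is Some s then stored_from w s p else p.

Definition loser (t : btree) (w : seq bool -> bool) (p : seq bool) : seq bool :=
  if w p then stored t w (rcons p true) else stored t w (rcons p false).

(* probability that the comparison at a node whose children carry [a] (left,
   index i) and [b] (right, index j) yields choice [c]
   (c = true: i is stored at the parent). *)
Definition choice_prob (a b : R) (c : bool) : R :=
  let pl := if a + b <= 1 then a / (a + b) else (1 - a) / (2 - a - b) in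
  if c then pl else 1 - pl.

Definition out_list (t : btree) (q : seq bool -> R) (w : seq bool -> bool) :=
  [seq loser t w p | p <- inodes t &
     (p != [::]) && (1 < piv t q (rcons p false) + piv t q (rcons p true))]
  ++ (if piv t q [::] == 1 then [:: stored t w [::]] else [::]).

Definition xi (t : btree) (q : seq bool -> R) (w : seq bool -> bool)
  (u : seq bool) : bool := stored t w u \in out_list t q w.

Definition weight (t : btree) (q : seq bool -> R) (w : seq bool -> bool) : R :=
  \prod_(p <- inodes t)
     choice_prob (piv t q (rcons p false)) (piv t q (rcons p true)) (w p).

Fixpoint assigns (ps : seq (seq bool)) : seq (seq bool -> bool) :=
  match ps with
  | [::] => [:: fun _ => false]
  | p :: ps' => [seq (fun x => if x == p then c else f x)
                | c <- [:: true; false], f <- assigns ps']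
  end.

Definition Pr (t : btree) (q : seq bool -> R)
  (E : (seq bool -> bool) -> bool) : R :=
  \sum_(w <- assigns (inodes t)) weight t q w * (E w)%:R.

Definition cPr (t : btree) (q : seq bool -> R)
  (E F : (seq bool -> bool) -> bool) : R :=
  Pr t q (fun w => E w && F w) / Pr t q F.

End Pivotal.

Definition Inodes (t : btree) (v : seq bool) :=
  [seq u <- nodes t | prefix v u && (u != v)].
Definition Onodes (t : btree) (v : seq bool) :=
  [seq u <- nodes t | (u != [::]) && ~~ prefix v u].

(* Main.v *)
Require Import Defs.
From HB Require Import structures.
From mathcomp Require Import all_boot all_order all_algebra.
From mathcomp Require Import ring.
Import Order.TTheory GRing.Theory Num.Theory.
Set Implicit Arguments. Unset Strict Implicit. Unset Printing Implicit Defensive.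
Local Open Scope ring_scope.
Lemma pre_antisym (x y : seq bool) : prefix x y -> prefix y x -> x = y.
Proof.
move=> H1 H2; have Hs : size x = size y by apply/eqP; rewrite eqn_leq !size_prefix.
by move: H1; rewrite prefixE Hs take_size => /eqP.
Qed.

Lemma pre_comp (a b s : seq bool) : prefix a s -> prefix b s ->
  prefix a b || prefix b a.
Proof.
rewrite !prefixE => /eqP Ha /eqP Hb.
case: (leqP (size a) (size b)) => H.
  by apply/orP; left; rewrite -{2}Ha -{1}Hb take_takel.
by apply/orP; right; rewrite -{2}Hb -{1}Ha take_takel // ltnW.
Qed.

Lemma pre_same_size (a b s : seq bool) : prefix a s -> prefix b s ->
  size a = size b -> a = b.
Proof.
move=> Ha Hb Hs; case/orP: (pre_comp Ha Hb) => H.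
  by move: H; rewrite prefixE Hs take_size => /eqP.
by move: H; rewrite prefixE -Hs take_size => /eqP.
Qed.

Lemma pre_rcons_eq (x : seq bool) b c s :
  prefix (rcons x b) s -> prefix (rcons x c) s -> b = c.
Proof.
move=> H1 H2; have := pre_same_size H1 H2; rewrite !size_rcons => /(_ erefl).
by move/rcons_inj => [].
Qed.

Lemma pre_rcons_lt (c p : seq bool) x : prefix c (rcons p x) -> c != rcons p x ->
  prefix c p.
Proof.
move=> /prefixP[z Hz]; case/lastP: z Hz => [|z y].
  by rewrite cats0 => ->; rewrite eqxx.
by rewrite -rcons_cat => /rcons_inj[-> _] _; apply: prefix_prefix.
Qed.

Lemma pre_strict (x y : seq bool) : prefix x y -> x != y ->
  exists b0, prefix (rcons x b0) y.
Proof.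
move=> /prefixP[z ->]; case: z => [|b0 z]; first by rewrite cats0 eqxx.
by move=> _; exists b0; rewrite -cat_rcons; apply: prefix_prefix.

Qed.

Lemma sub_nil t : sub t [::] = Some t. Proof. by case: t. Qed.

Lemma sub_cat t (x y : seq bool) : sub t (x ++ y) = obind (sub^~ y) (sub t x).
Proof.
elim: x t => [|b x IH] [|l r] //=; by case: y.
Qed.

Lemma sub_rcons t (x : seq bool) b :
  sub t (rcons x b) = if sub t x is Some (Nd l r) then Some (if b then r else l) else None.
Proof.
rewrite -cats1 sub_cat; case: (sub t x) => [s|] //=.
by case: s => [|l r] //=; case: b => /=; [case: r|case: l].
Qed.

Lemma stored_pre w s (x : seq bool) : prefix x (stored_from w s x).
Proof.
elim: s x => [|l IHl r IHr] x /=; first exact: prefix_refl.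
case: (w x); [apply: prefix_trans (IHl _)|apply: prefix_trans (IHr _)];
  exact: prefix_rcons.
Qed.

Lemma stored_pre' t w (x : seq bool) : prefix x (stored t w x).
Proof. rewrite /stored; case: (sub t x) => [s|]; [exact: stored_pre|exact: prefix_refl]. Qed.

Lemma F2 t w s (x y : seq bool) : sub t x = Some s -> prefix x y ->
  prefix y (stored_from w s x) -> stored_from w s x = stored t w y.
Proof.
elim: s x => [|l IHl r IHr] x Hs Hxy Hy.
  by have <- := pre_antisym Hxy Hy; rewrite /stored Hs.
have [<-|Hne] := eqVneq x y; first by rewrite /stored Hs.
have [b0 Hb0] := pre_strict Hxy Hne.
have Hb0s := prefix_trans Hb0 Hy.
move: Hy Hb0s => /=; case Hw: (w x) => Hy Hb0s.
- have := pre_rcons_eq Hb0s (stored_pre w l (rcons x false)) => Eb; subst b0.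
  by apply: IHl => //; rewrite sub_rcons Hs.
- have := pre_rcons_eq Hb0s (stored_pre w r (rcons x true)) => Eb; subst b0.
  by apply: IHr => //; rewrite sub_rcons Hs.
Qed.

Lemma storedN t w (a : seq bool) l r : sub t a = Some (Nd l r) ->
  stored t w a = stored t w (rcons a (~~ w a)).
Proof. by move=> Hs; rewrite /stored Hs sub_rcons Hs /=; case: (w a). Qed.

Lemma loserE t w (a : seq bool) : loser t w a = stored t w (rcons a (w a)).
Proof. by rewrite /loser; case: (w a). Qed.

Lemma Glem t w (x a : seq bool) l r : isSome (sub t x) -> sub t a = Some (Nd l r) ->
  prefix x a -> stored t w x != loser t w a.
Proof.
move=> Hx Ha Hxa; apply/eqP => E; rewrite loserE in E.
have Hc := stored_pre' t w (rcons a (w a)); rewrite -E in Hc.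
have Hpa : prefix a (stored t w x) := prefix_trans (prefix_rcons _ _) Hc.
move: Hx; case Hsx: (sub t x) => [s|] // _.
have E2 : stored t w x = stored t w a.
  rewrite /stored Hsx in Hpa *; exact: (F2 Hsx Hxa Hpa).
have Hc2 := stored_pre' t w (rcons a (~~ w a)).
rewrite -(storedN w Ha) -E2 in Hc2.
by have := pre_rcons_eq Hc Hc2; case: (w a).
Qed.

Lemma Ulem t w (a p : seq bool) l r l' r' : sub t a = Some (Nd l r) ->
  sub t p = Some (Nd l' r') -> loser t w a = loser t w p -> a = p.
Proof.
move=> Ha Hp E.
have Hc1 := stored_pre' t w (rcons a (w a)).
have Hc2 := stored_pre' t w (rcons p (w p)).
rewrite -!loserE E in Hc1 Hc2.
have [Ee|Ne] := eqVneq (rcons a (w a)) (rcons p (w p)).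
  by case/rcons_inj: Ee.
case/orP: (pre_comp Hc1 Hc2) => H.
- have H' := pre_rcons_lt H Ne.
  have Hx : isSome (sub t (rcons a (w a))) by rewrite sub_rcons Ha.
  by have := Glem w Hx Hp H'; rewrite -loserE E eqxx.
- rewrite eq_sym in Ne; have H' := pre_rcons_lt H Ne.
  have Hx : isSome (sub t (rcons p (w p))) by rewrite sub_rcons Hp.
  by have := Glem w Hx Ha H'; rewrite -loserE E eqxx.
Qed.

Lemma nodes_fromP s (r x : seq bool) :
  x \in nodes_from s r <-> exists z, x = r ++ z /\ isSome (sub s z).
Proof.
elim: s r x => [|l IHl rr IHr] r x /=.
  rewrite inE; split; first by move/eqP => ->; exists [::]; rewrite cats0.
  by case=> [[|b z]] [-> //]; rewrite cats0.
rewrite inE mem_cat; split.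
  case/orP => [/eqP ->|/orP[/IHl|/IHr] [z [-> Hz]]]; first by exists [::]; rewrite cats0.
    by exists (false :: z); rewrite cat_rcons.
  by exists (true :: z); rewrite cat_rcons.
case=> [[|b z]] [-> Hz]; first by rewrite cats0 eqxx.
apply/orP; right; apply/orP; case: b Hz => Hz; [right; apply (proj2 (IHr _ _))|left; apply (proj2 (IHl _ _))];
  by exists z; rewrite cat_rcons.
Qed.

Lemma nodesP t (x : seq bool) : x \in nodes t <-> isSome (sub t x).
Proof.
rewrite /nodes; split; first by case/nodes_fromP=> z [-> ].
by move=> H; apply/nodes_fromP; exists x.
Qed.

Lemma nth_cat_sz (r z : seq bool) b : nth false (r ++ b :: z) (size r) = b.
Proof. by rewrite nth_cat ltnn subnn. Qed.

Lemma uniq_nodes_from s (r : seq bool) : uniq (nodes_from s r).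
Proof.
elim: s r => [|l IHl rr IHr] r //=.
rewrite cat_uniq IHl IHr /= andbT; apply/andP; split.
  rewrite mem_cat; apply/negP => /orP[/nodes_fromP|/nodes_fromP] [z [E _]];
    by move: (congr1 size E); rewrite size_cat size_rcons => /eqP; rewrite -{1}(addn0 (size r)) addSnnS eqn_add2l.
apply/hasPn => x /nodes_fromP [z1 [E1 _]]; apply/negP => /nodes_fromP [z2 [E2 _]].
move: (congr1 (fun y => nth false y (size r)) E1) (congr1 (fun y => nth false y (size r)) E2) => /=.
by rewrite !cat_rcons !nth_cat_sz => ->.
Qed.

Lemma uniq_inodes t : uniq (inodes t).
Proof. exact/filter_uniq/uniq_nodes_from. Qed.

Lemma inodesP t (a : seq bool) : a \in inodes t -> exists l r, sub t a = Some (Nd l r).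
Proof.
rewrite mem_filter /is_internal => /andP[]; case: (sub t a) => [[|l r]|] // _ _.
by exists l, r.
Qed.

Lemma inodesI t (a : seq bool) l r : sub t a = Some (Nd l r) -> a \in inodes t.
Proof. move=> H; rewrite mem_filter /is_internal H /=; apply/nodesP; by rewrite H. Qed.

Lemma xi_root (R : realFieldType) t (q : seq bool -> R) w :
  xi t q w [::] = (piv t q [::] == 1).
Proof.
rewrite /xi /out_list mem_cat; case: eqP => _; first by rewrite mem_head orbT.
rewrite orbF; apply/negP => /mapP [p]; rewrite mem_filter => /andP[_ /inodesP [l [r Hp]]] E.
have Hx : isSome (sub t [::]) by rewrite sub_nil.
by move: (Glem w Hx Hp (prefix0s p)); rewrite E eqxx.
Qed.

Definition step (R : realFieldType) t (q : seq bool -> R) (w : seq bool -> bool)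
  (a : seq bool) (bu : bool) (x : bool) : bool :=
  if w a == ~~ bu then x
  else (a != [::]) && (1 < piv t q (rcons a false) + piv t q (rcons a true)).

Lemma xi_step (R : realFieldType) t (q : seq bool -> R) w (a : seq bool) bu :
  isSome (sub t (rcons a bu)) -> xi t q w (rcons a bu) = step t q w a bu (xi t q w a).
Proof.
rewrite sub_rcons; case Ha: (sub t a) => [[|l r]|] // _.
rewrite /step; case: eqP => Hw.
  by rewrite /xi (storedN w Ha) Hw negbK.
have -> : bu = w a by move: Hw; case: (w a); case: bu.
rewrite /xi -loserE /out_list mem_cat.
have -> : (loser t w a \in (if piv t q [::] == 1 then [:: stored t w [::]] else [::])) = false.
  case: (_ == 1) => //; rewrite inE; apply/negP => /eqP E.
  have Hx : isSome (sub t [::]) by rewrite sub_nil.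
  by move: (Glem w Hx Ha (prefix0s a)); rewrite E eqxx.
rewrite orbF; apply/idP/idP.
  case/mapP => p; rewrite mem_filter => /andP[Hc /inodesP [l' [r' Hp]]] E.
  by rewrite (Ulem Ha Hp E).
by move=> Hc; apply: map_f; rewrite mem_filter Hc (inodesI Ha).
Qed.

Fixpoint st (R : realFieldType) t (q : seq bool -> R) (w : seq bool -> bool)
  (r : seq bool) (x : bool) (path : seq bool) : bool :=
  match path with
  | [::] => x
  | b :: p => st t q w (rcons r b) (step t q w r b x) p
  end.

Lemma st_rcons (R : realFieldType) t (q : seq bool -> R) w r x p b :
  st t q w r x (rcons p b) = step t q w (r ++ p) b (st t q w r x p).
Proof.
elim: p r x => [|b' p IH] r x /=; first by rewrite cats0.
by rewrite IH cat_rcons.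
Qed.

Lemma xi_st (R : realFieldType) t (q : seq bool -> R) w (r path : seq bool) :
  isSome (sub t (r ++ path)) -> xi t q w (r ++ path) = st t q w r (xi t q w r) path.
Proof.
elim/last_ind: path => [|p b IH]; first by rewrite cats0.
rewrite -rcons_cat st_rcons => H; rewrite xi_step // IH //.
by move: H; rewrite sub_rcons; case: (sub t (r ++ p)).
Qed.

Lemma st_dep (R : realFieldType) t (q : seq bool -> R) w w' (r : seq bool) x path :
  (forall z, prefix z path -> z != path -> w (r ++ z) = w' (r ++ z)) ->
  st t q w r x path = st t q w' r x path.
Proof.
elim: path r x => [|b p IH] r x //= H.
have -> : step t q w r b x = step t q w' r b x.
  by rewrite /step; have := H [::] isT isT; rewrite cats0 => ->.
apply: IH => z Hz Hne; rewrite cat_rcons; apply: H.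
  by rewrite /= eqxx.
by rewrite eqseq_cons eqxx.
Qed.

Definition upd (w : seq bool -> bool) (p : seq bool) (c : bool) :=
  fun x => if x == p then c else w x.

Fixpoint Ex (R : realFieldType) (cp : seq bool -> bool -> R) (ps : seq (seq bool))
  (F : (seq bool -> bool) -> R) : R :=
  match ps with
  | [::] => F (fun _ => false)
  | p :: ps' => cp p true * Ex cp ps' (fun w => F (upd w p true))
              + cp p false * Ex cp ps' (fun w => F (upd w p false))
  end.

Lemma Ex_ext (R : realFieldType) cp ps (F G : (seq bool -> bool) -> R) :
  (forall w, F w = G w) -> Ex cp ps F = Ex cp ps G.
Proof.
elim: ps F G => [|p ps IH] F G H /=; first exact: H.
by congr (_ * _ + _ * _); apply: IH => w; apply: H.
Qed.

Lemma Ex_sum (R : realFieldType) cp ps (F : (seq bool -> bool) -> R) : uniq ps ->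
  \sum_(w <- assigns ps) (\prod_(p <- ps) cp p (w p)) * F w = Ex cp ps F.
Proof.
elim: ps F => [|p ps IH] F /=; first by rewrite big_seq1 big_nil mul1r.
case/andP => Hp Hu.
rewrite !big_cat big_nil ?addr0 !big_map -(IH _ Hu) -(IH _ Hu) !big_distrr /=.
rewrite addr0; congr (_ + _); apply: eq_bigr => f _; rewrite big_cons eqxx mulrA; congr (_ * _ * _);
  (apply: eq_big_seq => p' Hp'; have -> : (p' == p) = false by
     apply/negP => /eqP E; move: Hp; rewrite -E Hp'); by [].
Qed.

Lemma Ex_factor (R : realFieldType) cp (D : pred (seq bool)) ps
  (A B : (seq bool -> bool) -> R) :
  (forall w w', (forall p, D p -> w p = w' p) -> A w = A w') ->
  (forall w w', (forall p, ~~ D p -> w p = w' p) -> B w = B w') ->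
  Ex cp ps (fun w => A w * B w) =
  Ex cp (filter D ps) A * Ex cp (filter (predC D) ps) B.
Proof.
elim: ps A B => [|p ps IH] A B HA HB //=.
case Dp: (D p) => /=.
- have HB' c w : B (upd w p c) = B w.
    by apply: HB => p' Hp'; rewrite /upd; case: eqP => // E; rewrite E Dp in Hp'.
  have HA' c : forall w w', (forall p, D p -> w p = w' p) ->
      A (upd w p c) = A (upd w' p c).
    by move=> w w' H; apply: HA => p' Hp'; rewrite /upd; case: eqP => // _; apply: H.
  rewrite (Ex_ext _ _ (G := fun w => A (upd w p true) * B w)) => [|w]; last by rewrite HB'.
  rewrite (Ex_ext _ _ (F := fun w => A (upd w p false) * B (upd w p false))
                      (G := fun w => A (upd w p false) * B w)) => [|w]; last by rewrite HB'.
  rewrite (IH _ _ (HA' true) HB) (IH _ _ (HA' false) HB).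
  by rewrite mulrDl !mulrA.
- have HA' c w : A (upd w p c) = A w.
    by apply: HA => p' Hp'; rewrite /upd; case: eqP => // E; rewrite E Dp in Hp'.
  have HB' c : forall w w', (forall p, ~~ D p -> w p = w' p) ->
      B (upd w p c) = B (upd w' p c).
    by move=> w w' H; apply: HB => p' Hp'; rewrite /upd; case: eqP => // _; apply: H.
  rewrite (Ex_ext _ _ (G := fun w => A w * B (upd w p true))) => [|w]; last by rewrite HA'.
  rewrite (Ex_ext _ _ (F := fun w => A (upd w p false) * B (upd w p false))
                      (G := fun w => A w * B (upd w p false))) => [|w]; last by rewrite HA'.
  rewrite (IH _ _ HA (HB' true)) (IH _ _ HA (HB' false)).
  by rewrite mulrDr !mulrA [cp p true * _]mulrC [cp p false * _]mulrC.
Qed.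

Lemma natr_and (R : realFieldType) (x y : bool) : ((x && y)%:R : R) = x%:R * y%:R.
Proof. by case: x; case: y; rewrite ?mul1r ?mul0r. Qed.

Definition cpf (R : realFieldType) t (q : seq bool -> R) :=
  fun p c => choice_prob (piv t q (rcons p false)) (piv t q (rcons p true)) c.

Lemma PrE (R : realFieldType) t (q : seq bool -> R) E :
  Pr t q E = Ex (cpf t q) (inodes t) (fun w => (E w)%:R).
Proof. by rewrite /Pr -Ex_sum ?uniq_inodes. Qed.

Lemma xi0 (R : realFieldType) t (q : seq bool -> R) w (u : seq bool) :
  isSome (sub t u) -> xi t q w u = st t q w [::] (piv t q [::] == 1) u.
Proof. by move=> H; rewrite -(xi_root t q w) -xi_st. Qed.

Lemma xi_out (R : realFieldType) t (q : seq bool -> R) (v u : seq bool) w w' :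
  isSome (sub t u) ->
  (forall z, prefix z u -> z != u -> ~~ prefix v z) ->
  (forall p, ~~ prefix v p -> w p = w' p) -> xi t q w u = xi t q w' u.
Proof.
move=> Hu Hz Hw; rewrite !xi0 //; apply: st_dep => z H1 H2; apply: Hw; exact: Hz.
Qed.

Lemma frac_id (R : realFieldType) (a g m h : R) :
  a * g / (m * h) = a * h / (m * h) * (m * g / (m * h)).
Proof.
have [->|Hm] := eqVneq m 0; first by rewrite !mul0r invr0 !mulr0.
have [->|Hh] := eqVneq h 0; first by rewrite !mulr0 invr0 !mulr0.
by field; rewrite Hm Hh.
Qed.

Theorem propositionE4 (R : realFieldType) (t : btree) (q : seq bool -> R)
  (Hq : forall p, p \in leaves t -> 0 < q p < 1)
  (Hsum : exists n : nat, \sum_(p <- leaves t) q p = n%:R)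
  (Hint : forall p, p \in inodes t -> p != [::] ->
            piv t q (rcons p false) + piv t q (rcons p true) != 1)
  (Hroot : piv t q [:: false] + piv t q [:: true] = 1)
  (v : seq bool) (Hv : v \in inodes t) (Hv0 : v != [::]) (b : bool)
  (Hpos : 0 < Pr t q (fun w => xi t q w v == b))
  (xI xO : seq bool -> bool) :
  cPr t q (fun w => all (fun u => xi t q w u == xI u) (Inodes t v)
                    && all (fun u => xi t q w u == xO u) (Onodes t v))
          (fun w => xi t q w v == b)
  = cPr t q (fun w => all (fun u => xi t q w u == xI u) (Inodes t v))
            (fun w => xi t q w v == b)
    * cPr t q (fun w => all (fun u => xi t q w u == xO u) (Onodes t v))
              (fun w => xi t q w v == b).
Proof.
pose D : pred (seq bool) := fun p => prefix v p.
pose AI w := all (fun u => st t q w v b (drop (size v) u) == xI u) (Inodes t v).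
pose EO w := all (fun u => xi t q w u == xO u) (Onodes t v).
pose H w := xi t q w v == b.
have HvS : isSome (sub t v) by apply/nodesP; move: Hv; rewrite mem_filter => /andP[].
have HI w : H w -> all (fun u => xi t q w u == xI u) (Inodes t v) = AI w.
  move=> /eqP Hw; apply: eq_in_all => u; rewrite mem_filter => /andP[/andP[Hvu _] /nodesP Hu].
  have Eu : u = v ++ drop (size v) u.
    by move: Hvu; rewrite prefixE => /eqP {1}<-; rewrite cat_take_drop.
  by rewrite {1}Eu xi_st -?Eu // Hw.
have dA : forall w w', (forall p, D p -> w p = w' p) -> (AI w)%:R = (AI w')%:R :> R.
  move=> w w' Hw; suff -> : AI w = AI w' by [].
  apply: eq_in_all => u _; congr (_ == _).
  by apply: st_dep => z _ _; apply: Hw; exact: prefix_prefix.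
have dH : forall w w', (forall p, ~~ D p -> w p = w' p) -> H w = H w'.
  move=> w w' Hw; rewrite /H; congr (_ == _); apply: (xi_out q HvS _ Hw).
  move=> z Hz Hne; apply/negP => Hvz; by rewrite (pre_antisym Hz Hvz) eqxx in Hne.
have dO : forall w w', (forall p, ~~ D p -> w p = w' p) -> EO w = EO w'.
  move=> w w' Hw; apply: eq_in_all => u; rewrite mem_filter => /andP[/andP[_ Hvu] /nodesP Hu].
  congr (_ == _); apply: (xi_out q Hu _ Hw) => z Hz _; apply/negP => Hvz.
  by rewrite (prefix_trans Hvz Hz) in Hvu.
have d1 : forall w w' : seq bool -> bool, (forall p, D p -> w p = w' p) -> (fun _ => 1) w = (fun _ => 1) w' :> R by [].
have dOH : forall w w', (forall p, ~~ D p -> w p = w' p) -> ((EO w && H w)%:R : R) = (EO w' && H w')%:R.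
  by move=> w w' Hw; rewrite (dO _ _ Hw) (dH _ _ Hw).
have dH' : forall w w', (forall p, ~~ D p -> w p = w' p) -> ((H w)%:R : R) = (H w')%:R.
  by move=> w w' Hw; rewrite (dH _ _ Hw).
rewrite /cPr !PrE.
rewrite (Ex_ext _ _ (G := fun w => (AI w)%:R * (EO w && H w)%:R)); last first.
  move=> w; rewrite -natr_and; congr (_ %:R); rewrite -/(H w) -/(EO w).
  by case Hw: (H w); rewrite ?andbF ?andbT // HI.
rewrite (Ex_ext _ _ (F := fun w => ((all _ _ && H w))%:R)
                    (G := fun w => (AI w)%:R * (H w)%:R)); last first.
  move=> w; rewrite -natr_and; congr (_ %:R).
  by case Hw: (H w); rewrite ?andbF ?andbT // HI.
rewrite (Ex_ext _ _ (F := fun w => ((EO w && H w))%:R)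
                    (G := fun w => (fun _ => 1) w * (EO w && H w)%:R)); last by move=> w; rewrite mul1r.
rewrite (Ex_ext _ _ (F := fun w => (H w)%:R)
                    (G := fun w => (fun _ => 1) w * (H w)%:R)); last by move=> w; rewrite mul1r.
rewrite !(Ex_factor _ _ dA) //.
rewrite (@Ex_factor _ _ D _ (fun _ => 1) (fun w => (H w)%:R) d1 dH').
rewrite (@Ex_factor _ _ D _ (fun _ => 1) (fun w => (EO w && H w)%:R) d1 dOH).
exact: frac_id.
Qed.
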